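(* Let $n\ge2$, let $\sigma,\delta,\tau\in\mathbb{C}$ with $|\sigma|=|\tau|>0$, fix a square root $\sqrt{\sigma\tau}$, and let $(\alpha,\beta)$ be one of the eight pairs $(0,\sqrt{\sigma\tau})$, $(\sqrt{\sigma\tau},0)$, $(0,-\sqrt{\sigma\tau})$, $(-\sqrt{\sigma\tau},0)$, $(\sqrt{\sigma\tau},-\sqrt{\sigma\tau})$, $(-\sqrt{\sigma\tau},\sqrt{\sigma\tau})$, $(\sqrt{\sigma\tau},\sqrt{\sigma\tau})$, $(-\sqrt{\sigma\tau},-\sqrt{\sigma\tau})$. Then $T_{\alpha,\beta}$ is normal, and consequently every eigenvalue $\lambda$ of $T_{\alpha,\beta}$ has condition number $\kappa(\lambda)=1$.
   Context: $T_{\alpha,\beta}$ denotes the $n\times n$ tridiagonal matrix with subdiagonal entries $\sigma$, superdiagonal entries $\tau$, and diagonal entries $\delta$ except the $(1,1)$ entry $\delta-\alpha$ and the $(n,n)$ entry $\delta-\beta$. For a simple eigenvalue $\lambda$ with right eigenvector $x$ ($Ax=\lambda x$) and left eigenvector $y$ ($y^HA=\lambda y^H$), the condition number is $\kappa(\lambda)=\|x\|_2\|y\|_2/|y^Hx|$. *)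

(* Defs.v *)
(* The complex field is modelled by an arbitrary
   numClosedFieldType C (algebraically closed field with conjugation and
   norm, e.g. complex numbers over a real closed field, or algC). *)
From HB Require Import structures.
From mathcomp Require Import all_boot all_order all_algebra.
Set Implicit Arguments. Unset Strict Implicit. Unset Printing Implicit Defensive.
Import Order.TTheory GRing.Theory Num.Theory.
Local Open Scope ring_scope.

Definition Tab (C : numClosedFieldType) (n : nat) (sigma delta tau alpha beta : C)
  : 'M[C]_n :=
  \matrix_(i < n, j < n)
    if i == j then
      delta - (if nat_of_ord i == 0%N then alpha else 0)
            - (if nat_of_ord i == n.-1 then beta else 0)
    else if nat_of_ord j == (nat_of_ord i).+1 then tau
    else if nat_of_ord i == (nat_of_ord j).+1 then sigma
    else 0.

Definition ctrans (C : numClosedFieldType) (m n : nat) (A : 'M[C]_(m, n))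
  : 'M[C]_(n, m) := map_mx (fun z => z^*) A^T.

Definition normal_mx (C : numClosedFieldType) (n : nat) (A : 'M[C]_n) : Prop :=
  A *m ctrans A = ctrans A *m A.

Definition norm2 (C : numClosedFieldType) (n : nat) (x : 'cV[C]_n) : C :=
  sqrtC (\sum_(i < n) `|x i 0| ^+ 2).

(* kappa = ||x||_2 ||y||_2 / |y^H x| (right eigenvector x, left eigenvector y) *)
Definition cond_eig (C : numClosedFieldType) (n : nat) (x y : 'cV[C]_n) : C :=
  norm2 x * norm2 y / `| (ctrans y *m x) 0 0 |.

(* Main.v *)
Require Import Defs.
From HB Require Import structures.
From mathcomp Require Import all_boot all_order all_algebra.
From mathcomp Require Import zify ring lra.
Set Implicit Arguments. Unset Strict Implicit. Unset Printing Implicit Defensive.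
Import Order.TTheory GRing.Theory Num.Theory.
Local Open Scope ring_scope.


Lemma ctransD {C : numClosedFieldType} m n (A B : 'M[C]_(m,n)) : ctrans (A + B) = ctrans A + ctrans B.
Proof. by apply/matrixP => i j; rewrite !mxE rmorphD. Qed.
Lemma ctransN {C : numClosedFieldType} m n (A : 'M[C]_(m,n)) : ctrans (- A) = - ctrans A.
Proof. by apply/matrixP => i j; rewrite !mxE rmorphN. Qed.
Lemma ctransB {C : numClosedFieldType} m n (A B : 'M[C]_(m,n)) : ctrans (A - B) = ctrans A - ctrans B.
Proof. by rewrite ctransD ctransN. Qed.
Lemma ctransZ {C : numClosedFieldType} m n (c : C) (A : 'M[C]_(m,n)) : ctrans (c *: A) = c^* *: ctrans A.
Proof. by apply/matrixP => i j; rewrite !mxE rmorphM. Qed.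
Lemma ctransK {C : numClosedFieldType} m n (A : 'M[C]_(m,n)) : ctrans (ctrans A) = A.
Proof. by apply/matrixP => i j; rewrite !mxE conjCK. Qed.
Lemma ctrans_scalar {C : numClosedFieldType} m (c : C) : ctrans (c%:M : 'M[C]_m) = c^*%:M.
Proof. by apply/matrixP => i j; rewrite !mxE rmorphMn eq_sym. Qed.
Lemma ctransM {C : numClosedFieldType} m n p (A : 'M[C]_(m,n)) (B : 'M[C]_(n,p)) :
  ctrans (A *m B) = ctrans B *m ctrans A.
Proof.
apply/matrixP => i j; rewrite !mxE rmorph_sum; apply: eq_bigr => k _.
by rewrite !mxE rmorphM mulrC.
Qed.
Lemma ctrans_delta {C : numClosedFieldType} m (i : 'I_m) : ctrans (delta_mx i i : 'M[C]_m) = delta_mx i i.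
Proof.
apply/matrixP => a b; rewrite !mxE rmorph_nat. 
by rewrite andbC.
Qed.

Definition Lsh {C : numClosedFieldType} m : 'M[C]_m := \matrix_(i, j) ((i : nat) == j.+1)%:R.

Lemma Tab_dec {C : numClosedFieldType} m (sigma delta tau alpha beta : C) :
  Tab m.+2 sigma delta tau alpha beta =
  delta%:M + ((sigma *: Lsh m.+2 + tau *: ctrans (Lsh m.+2))
     - (alpha *: delta_mx ord0 ord0 + beta *: delta_mx ord_max ord_max)).
Proof.
apply/matrixP => -[i hi] [j hj]; rewrite !mxE rmorph_nat /=.
rewrite -!val_eqE /=. 
repeat match goal with |- context [(?a == ?b)%N] => case: (a =P b) => ? /= end;
  try (exfalso; lia); rewrite ?mulr1 ?mulr0 ?mulr1n ?mulr0n; ring.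
Qed.


Lemma normal_shift {C : numClosedFieldType} n (d : C) (X : 'M[C]_n) :
  X *m ctrans X = ctrans X *m X -> normal_mx (d%:M + X).
Proof.
move=> hX; rewrite /normal_mx ctransD ctrans_scalar.
rewrite !mulmxDl !mulmxDr hX !mul_scalar_mx !mul_mx_scalar.
rewrite !scale_scalar_mx mulrC -!addrA; congr (_ + _).
by rewrite addrCA.
Qed.

Lemma normal_diff {C : numClosedFieldType} n (P D : 'M[C]_n) :
  P *m ctrans P = ctrans P *m P -> D *m ctrans D = ctrans D *m D ->
  P *m ctrans D = ctrans P *m D -> D *m ctrans P = ctrans D *m P ->
  (P - D) *m ctrans (P - D) = ctrans (P - D) *m (P - D).
Proof.
move=> h1 h2 h3 h4; rewrite ctransB !mulmxBl !mulmxBr.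
by rewrite h1 h2 h3 h4.
Qed.

Lemma add4_rev (V : zmodType) (a b c d : V) : a + b + (c + d) = d + c + (b + a).
Proof. by rewrite addrC; congr (_ + _); apply: addrC. Qed.

Lemma PP_normal {C : numClosedFieldType} n (L : 'M[C]_n) (sigma tau : C) :
  `|sigma| = `|tau| ->
  let P := sigma *: L + tau *: ctrans L in
  P *m ctrans P = ctrans P *m P.
Proof.
move=> hst P; rewrite /P ctransD !ctransZ ctransK.
rewrite !mulmxDl !mulmxDr -!scalemxAl -!scalemxAr !scalerA.
have e : sigma * sigma^* = tau * tau^* by rewrite -!normCK hst.
rewrite (mulrC sigma^* sigma) (mulrC tau^* tau) (mulrC sigma^* tau) (mulrC tau^* sigma) e.
by rewrite add4_rev.
Qed.

Lemma cross1 {C : numClosedFieldType} n (P E : 'M[C]_n) (a : C) :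
  ctrans E = E -> a^* *: P = a *: ctrans P ->
  P *m ctrans (a *: E) = ctrans P *m (a *: E).
Proof.
by move=> hE hP; rewrite ctransZ hE -!scalemxAr !scalemxAl hP.
Qed.

Lemma cross2 {C : numClosedFieldType} n (P E : 'M[C]_n) (a : C) :
  ctrans E = E -> a^* *: P = a *: ctrans P ->
  (a *: E) *m ctrans P = ctrans (a *: E) *m P.
Proof.
by move=> hE hP; rewrite ctransZ hE -!scalemxAl !scalemxAr hP.
Qed.


Definition goodc {C : numClosedFieldType} (sigma tau a : C) := a^* * sigma = a * tau^* /\ a^* * tau = a * sigma^*.

Lemma goodc0 {C : numClosedFieldType} (sigma tau : C) : goodc sigma tau 0.
Proof. by rewrite /goodc rmorph0 !mul0r. Qed.

Lemma goodcN {C : numClosedFieldType} (sigma tau a : C) : goodc sigma tau a -> goodc sigma tau (- a).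
Proof. by case=> h1 h2; rewrite /goodc rmorphN !mulNr h1 h2. Qed.

Lemma goodcs {C : numClosedFieldType} (sigma tau s : C) : `|sigma| = `|tau| -> s ^+ 2 = sigma * tau ->
  goodc sigma tau s.
Proof.
move=> hst hsq; have [->|s0] := eqVneq s 0; first exact: goodc0.
have hs : s * s^* = tau * tau^*.
  by rewrite -!normCK -normrX hsq normrM hst expr2.
have hs' : s * s^* = sigma * sigma^*.
  by rewrite -!normCK -normrX hsq normrM hst expr2.
split; apply: (mulfI s0).
  by rewrite mulrA hs mulrA -expr2 hsq; ring.
by rewrite mulrA hs' mulrA -expr2 hsq; ring.
Qed.

Lemma goodP {C : numClosedFieldType} n (L : 'M[C]_n) (sigma tau a : C) : goodc sigma tau a ->
  a^* *: (sigma *: L + tau *: ctrans L) = a *: ctrans (sigma *: L + tau *: ctrans L).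
Proof.
case=> h1 h2; rewrite ctransD !ctransZ ctransK !scalerDr !scalerA h1 h2.
by rewrite addrC.
Qed.

Lemma DD_normal {C : numClosedFieldType} m (alpha beta : C) :
  let D := alpha *: delta_mx ord0 ord0 + beta *: delta_mx ord_max ord_max
    : 'M[C]_m.+2 in
  D *m ctrans D = ctrans D *m D.
Proof.
move=> D; rewrite /D ctransD !ctransZ !ctrans_delta !mulmxDl !mulmxDr.
rewrite -!scalemxAl -!scalemxAr !mul_delta_mx !mul_delta_mx_0 //.
by rewrite !scaler0 !addr0 !add0r !scalerA mulrC (mulrC beta).
Qed.

Lemma Tab_normal {C : numClosedFieldType} m (sigma delta tau alpha beta : C) :
  `|sigma| = `|tau| -> goodc sigma tau alpha -> goodc sigma tau beta ->
  normal_mx (Tab m.+2 sigma delta tau alpha beta).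
Proof.
move=> hst ga gb; rewrite Tab_dec; apply: normal_shift; apply: normal_diff.
- exact: PP_normal.
- exact: DD_normal.
- rewrite [ctrans (alpha *: _ + _)]ctransD mulmxDr [in RHS]mulmxDr.
  by rewrite !cross1 // ?ctrans_delta //; apply: goodP.
- rewrite [ctrans (alpha *: _ + _)]ctransD mulmxDl [in RHS]mulmxDl.
  by rewrite !cross2 // ?ctrans_delta //; apply: goodP.
Qed.


Definition sumsq {C : numClosedFieldType} n (v : 'cV[C]_n) := \sum_(i < n) `|v i 0| ^+ 2.

Lemma ctrans_mul00 {C : numClosedFieldType} n (u v : 'cV[C]_n) :
  (ctrans u *m v) 0 0 = \sum_(i < n) (u i 0)^* * v i 0.
Proof. by rewrite !mxE; apply: eq_bigr => i _; rewrite !mxE. Qed.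

Lemma sumsqE {C : numClosedFieldType} n (v : 'cV[C]_n) : (ctrans v *m v) 0 0 = sumsq v.
Proof. by rewrite ctrans_mul00; apply: eq_bigr => i _; rewrite normCKC. Qed.

Lemma sumsq_ge0 {C : numClosedFieldType} n (v : 'cV[C]_n) : 0 <= sumsq v.
Proof. by apply: sumr_ge0 => i _; rewrite exprn_ge0. Qed.

Lemma sumsq_eq0 {C : numClosedFieldType} n (v : 'cV[C]_n) : sumsq v = 0 -> v = 0.
Proof.
move=> h; apply/matrixP => i j; rewrite (ord1 j) mxE.
have := @psumr_eq0P _ _ xpredT (fun i => `|v i 0| ^+ 2) _ h i isT.
have /[swap]/[apply] : forall i, xpredT i -> 0 <= `|v i 0| ^+ 2 by move=> *; rewrite exprn_ge0.
by move/eqP; rewrite expf_eq0 /= normr_eq0 => /eqP.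
Qed.

Lemma left_right {C : numClosedFieldType} n (A : 'M[C]_n) (lambda : C) (y : 'cV[C]_n) :
  normal_mx A -> ctrans y *m A = lambda *: ctrans y -> A *m y = lambda *: y.
Proof.
move=> hA hy.
set N := (- lambda)%:M + A.
have hN : normal_mx N.
  by apply: normal_shift.
have h1 : ctrans y *m N = 0.
  by rewrite /N mulmxDr hy mul_mx_scalar scaleNr addNr.
have h2 : ctrans N *m y = 0.
  by rewrite -[y]ctransK -ctransM h1; apply/matrixP => i j; rewrite !mxE rmorph0.
set w := N *m y.
have hw : ctrans w *m w = 0.
  by rewrite /w ctransM mulmxA -(mulmxA _ _ N) -hN -!mulmxA h2 !mulmx0.
have w0 : w = 0 by apply: sumsq_eq0; rewrite -sumsqE hw mxE.
apply/eqP; rewrite -subr_eq0; apply/eqP.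
by move: w0; rewrite /w /N mulmxDl mul_scalar_mx scaleNr addrC.
Qed.


Lemma eig_zero {C : numClosedFieldType} n (sigma delta tau alpha beta lambda : C) (v : 'cV[C]_n) :
  tau != 0 -> Tab n sigma delta tau alpha beta *m v = lambda *: v ->
  (forall j : 'I_n, (j : nat) = 0%N -> v j 0 = 0) -> v = 0.
Proof.
move=> ht hA v0.
have claim : forall k, (k < n)%N -> forall j : 'I_n, (j <= k)%N -> v j 0 = 0.
  elim=> [|k IH] hk j hj; first by apply: v0; lia.
  have hk0 : (k < n)%N by lia.
  case: (ltnP j k.+1) => hjk; first by apply: IH.
  have -> : j = Ordinal hk by apply: val_inj => /=; lia.
  have := congr1 (fun M : 'cV[C]_n => M (Ordinal hk0) 0) hA.
  rewrite !mxE (bigD1 (Ordinal hk)) //= big1.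
    rewrite (IH hk0 (Ordinal hk0)) //= mulr0 addr0 !mxE /=.
    have -> : (Ordinal hk0 == Ordinal hk) = false by apply/eqP => -[]; lia.
    rewrite eqxx => /eqP; rewrite mulf_eq0 (negPf ht) /= => /eqP //.
  move=> j' hj'; rewrite !mxE.
  case: (ltnP k j') => hkj.
    have -> : (Ordinal hk0 == j') = false by apply/eqP => e; rewrite -e /= in hkj; lia.
    have -> : (j' == k.+1 :> nat) = false.
      by apply/eqP => e; move: hj'; rewrite -val_eqE /= e eqxx.
    by rewrite /= (_ : (k == j'.+1) = false) ?mul0r //; lia.
  by rewrite (IH hk0 j') // mulr0.
apply/matrixP => i j; rewrite (ord1 j) mxE; apply: (claim i) => //.
Qed.


Lemma norm2_scale {C : numClosedFieldType} n (c : C) (x : 'cV[C]_n) : norm2 (c *: x) = `|c| * norm2 x.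
Proof.
rewrite /norm2 (eq_bigr (fun i => `|c| ^+ 2 * `|x i 0| ^+ 2)); last first.
  by move=> i _; rewrite mxE normrM exprMn.
rewrite -mulr_sumr sqrtCM ?sqrCK //; rewrite ?nnegrE ?exprn_ge0 //.
by apply: sumr_ge0 => i _; rewrite exprn_ge0.
Qed.

Lemma cond_scale {C : numClosedFieldType} n (c : C) (x : 'cV[C]_n) : x != 0 -> c != 0 -> cond_eig x (c *: x) = 1.
Proof.
move=> hx hc; rewrite /cond_eig norm2_scale ctrans_mul00.
rewrite (eq_bigr (fun i => c^* * (`|x i 0| ^+ 2))); last first.
  by move=> i _; rewrite mxE rmorphM normCKC mulrA.
rewrite -mulr_sumr -/(sumsq x) normrM norm_conjC ger0_norm ?sumsq_ge0 //.
have -> : sumsq x = norm2 x ^+ 2 by rewrite sqrtCK.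
rewrite mulrCA -expr2 divff // mulf_neq0 ?normr_eq0 // expf_neq0 //.
rewrite sqrtC_eq0; apply/negP => /eqP /sumsq_eq0 e; by rewrite e eqxx in hx.
Qed.


Theorem proposition3 (C : numClosedFieldType) (n : nat) (sigma delta tau s alpha beta : C) :
  (2 <= n)%N ->
  `|sigma| = `|tau| -> 0 < `|sigma| ->
  s ^+ 2 = sigma * tau ->
  (alpha, beta) \in [:: (0, s); (s, 0); (0, - s); (- s, 0);
                        (s, - s); (- s, s); (s, s); (- s, - s)] ->
  normal_mx (Tab n sigma delta tau alpha beta) /\
  (forall (lambda : C) (x y : 'cV[C]_n),
      x != 0 -> y != 0 ->
      Tab n sigma delta tau alpha beta *m x = lambda *: x ->
      ctrans y *m Tab n sigma delta tau alpha beta = lambda *: ctrans y ->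
      cond_eig x y = 1).
Proof.
case: n => [|[|m]] // _ hst hs0 hsq hab.
have ht : tau != 0 by rewrite -normr_eq0 -hst gt_eqF.
have gs := goodcs hst hsq.
have [ga gb] : goodc sigma tau alpha /\ goodc sigma tau beta.
  move: hab; rewrite !inE !xpair_eqE.
  have gN := goodcN gs; have g0 := goodc0 sigma tau.
  by do ![case/orP]; case/andP => /eqP-> /eqP->; split.
have hN : normal_mx (Tab m.+2 sigma delta tau alpha beta) by apply: Tab_normal.
split=> // lambda x y hx hy hAx hyA.
have hAy := left_right hN hyA.
have x0 : x ord0 0 != 0.
  apply/negP => /eqP e; move/negP: hx; apply; apply/eqP.
  apply: (eig_zero ht hAx) => j /= hj.
  by have -> : j = ord0 by apply: val_inj.
set z := x ord0 0 *: y - y ord0 0 *: x.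
have hz : Tab m.+2 sigma delta tau alpha beta *m z = lambda *: z.
  rewrite /z mulmxBr -!scalemxAr hAx hAy.
  by apply/matrixP => i j; rewrite !mxE; ring.
have z0 : z = 0.
  apply: (eig_zero ht hz) => j /= hj.
  have -> : j = ord0 by apply: val_inj.
  by rewrite /z !mxE mulrC subrr.
have ey : y = (y ord0 0 / x ord0 0) *: x.
  apply/matrixP => i j; move/matrixP: z0 => /(_ i j); rewrite !mxE.
  move/eqP; rewrite subr_eq0 => /eqP e.
  by rewrite mulrAC -e mulrAC divff // mul1r.
have hc : y ord0 0 / x ord0 0 != 0.
  by apply/negP => /eqP e; rewrite e scale0r in ey; rewrite ey eqxx in hy.
by rewrite ey cond_scale.
Qed.
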